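(* Let $\Phi$ be an irreducible crystallographic root system with positive system $\Phi^+$ and let $k$ be a positive integer. If $\alpha\in\Phi^+$ and $H_\alpha^r$ is a ceiling of a dominant region $R$ of the $k$-Catalan arrangement of $\Phi$, then $\alpha$ is a rank $r$ indecomposable element of $\mathcal{I}=\theta(R)$.
   Context: $\Phi$ lives in a Euclidean space $V$ with inner product $\langle\cdot,\cdot\rangle$, simple system $S$. $H_\alpha^r=\{x\mid\langle x,\alpha\rangle=r\}$. The $k$-Catalan arrangement consists of $H_\alpha^r$, $\alpha\in\Phi$, $r\in\{0,\ldots,k\}$; regions are components of its complement; $R$ is dominant if $\langle x,\alpha\rangle>0$ for all $\alpha\in\Phi^+$, $x\in R$. Walls of $R$ are hyperplanes of the arrangement supporting a facet of $R$; a ceiling is a wall not containing the origin with the origin on the same side as $R$. Root poset: $\alpha\le\beta$ iff $\beta-\alpha$ is a nonnegative integer combination of $S$; ideals are down-closed. $\theta(R)=(I_1,\ldots,I_k)$ with $I_i=\{\alpha\in\Phi^+\mid\langle x,\alpha\rangle<i\ \forall x\in R\}$. For a chain $\mathcal{I}=(I_1,\ldots,I_k)$, $r_\alpha(\mathcal{I})=\min\{r_1+\cdots+r_m\mid\alpha=\alpha_1+\cdots+\alpha_m,\alpha_i\in I_{r_i},r_i\in\{1,\ldots,k\}\}$, $\infty$ if none. With $I_0=\varnothing$ and sumsets $A+B=\{a+b\}$, $\alpha\in\Phi^+$ is a rank $r$ indecomposable element of $\mathcal{I}$ if $\alpha\in I_r$ and (i) $r_\alpha(\mathcal{I})=r$;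 (ii) $\alpha\notin I_i+I_j$ whenever $i+j=r$; (iii) whenever $\beta\in\Phi^+$ and $r_{\alpha+\beta}(\mathcal{I})=t\le k$, then $\beta\in I_{t-r}$. *)

(* Defs.v *)
From HB Require Import structures.
From mathcomp Require Import all_boot all_order all_algebra.
From mathcomp Require Import all_classical all_reals all_analysis.
Set Implicit Arguments. Unset Strict Implicit. Unset Printing Implicit Defensive.
Import Order.TTheory GRing.Theory Num.Theory.
Import numFieldNormedType.Exports.
Local Open Scope classical_set_scope.
Local Open Scope ring_scope.

Section Defs.
Variables (R : realType) (n : nat).
Notation V := 'rV[R]_n.

Definition ip (x y : V) : R := \sum_(i < n) x 0 i * y 0 i.

Definition hyperplane (a : V) (r : R) : set V := [set x | ip x a = r].

Definition root_system (Phi : seq V) : Prop :=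
  [/\ (0 : V) \notin Phi,
      (<<Phi>>%VS = fullv),
      (forall a, a \in Phi -> forall c : R, c *: a \in Phi -> c = 1 \/ c = -1),
      (forall a b, a \in Phi -> b \in Phi ->
          b - ((2 * ip b a) / ip a a) *: a \in Phi) &
      (forall a b, a \in Phi -> b \in Phi ->
          (2 * ip b a) / ip a a \is a Num.int)].

Definition irreducible_rs (Phi : seq V) : Prop :=
  forall P : pred V,
    (exists2 a, a \in Phi & P a) -> (exists2 b, b \in Phi & ~~ P b) ->
    exists a b, [/\ a \in Phi, b \in Phi, P a, ~~ P b & ip a b != 0].

Definition nonneg_int_comb (S : seq V) (v : V) : Prop :=
  exists c : 'I_(size S) -> nat, v = \sum_(i < size S) (c i)%:R *: S`_i.

Definition simple_system (Phi S : seq V) : Prop :=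
  [/\ {subset S <= Phi}, free S &
      forall a, a \in Phi -> nonneg_int_comb S a \/ nonneg_int_comb S (- a)].

Definition positive_root (Phi S : seq V) (a : V) : Prop :=
  a \in Phi /\ nonneg_int_comb S a.

Definition catalan_complement (Phi : seq V) (k : nat) : set V :=
  [set x | forall a r, a \in Phi -> (r <= k)%N -> ip x a != r%:R].

Definition catalan_region (Phi : seq V) (k : nat) (Rg : set V) : Prop :=
  exists x, catalan_complement Phi k x /\
            Rg = connected_component (catalan_complement Phi k) x.

Definition dominant (Phi S : seq V) (Rg : set V) : Prop :=
  forall x a, Rg x -> positive_root Phi S a -> 0 < ip x a.

(* H supports a facet of Rg: H meets the closure of Rg in a set with
   nonempty interior relative to H (a face of codimension one). *)
Definition supports_facet (Rg H : set V) : Prop :=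
  exists2 x, H x & exists2 e : R, 0 < e &
     forall y, H y -> `|y - x| < e -> closure Rg y.

Definition wall (Phi : seq V) (k : nat) (Rg : set V) (a : V) (r : nat) : Prop :=
  [/\ a \in Phi, (r <= k)%N & supports_facet Rg (hyperplane a r%:R)].

(* Ceiling: a wall not containing the origin, with the origin on the same
   side of it as Rg. *)
Definition ceiling (Phi : seq V) (k : nat) (Rg : set V) (a : V) (r : nat) : Prop :=
  [/\ wall Phi k Rg a r, ~ hyperplane a r%:R 0 &
      forall x, Rg x -> 0 < (ip 0 a - r%:R) * (ip x a - r%:R)].

(* theta(R) = (I_1, ..., I_k), with the convention I_0 = empty. *)
Definition theta (Phi S : seq V) (Rg : set V) (i : nat) : set V :=
  [set a | i != 0%N /\ positive_root Phi S a /\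
           forall x, Rg x -> ip x a < i%:R].

Definition decomp (I : nat -> set V) (k : nat) (v : V) (t : nat) : Prop :=
  exists s : seq (V * nat),
    [/\ s != [::],
        forall p, p \in s -> [/\ (1 <= p.2)%N, (p.2 <= k)%N & I p.2 p.1],
        v = \sum_(p <- s) p.1 &
        t = (\sum_(p <- s) p.2)%N].

Definition r_val (I : nat -> set V) (k : nat) (v : V) (t : nat) : Prop :=
  decomp I k v t /\ forall t', decomp I k v t' -> (t <= t')%N.

Definition rank_indecomposable (Phi S : seq V) (k : nat) (I : nat -> set V)
    (a : V) (r : nat) : Prop :=
  [/\ I r a,
      r_val I k a r,
      (forall i j, (i + j)%N = r ->
          ~ exists b c, [/\ I i b, I j c & a = b + c]) &
      (forall b t, positive_root Phi S b -> r_val I k (a + b) t -> (t <= k)%N ->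
          I (t - r)%N b)].

End Defs.

(* Main.v *)
Require Import Defs.
From HB Require Import structures.
From mathcomp Require Import all_boot all_order all_algebra.
From mathcomp Require Import all_classical all_reals all_analysis.
From mathcomp Require Import lra.
Import Order.TTheory GRing.Theory Num.Theory.
Import numFieldNormedType.Exports.
Local Open Scope classical_set_scope.
Local Open Scope ring_scope.

Section H.
Variables (R : realType) (n : nat).
Notation V := 'rV[R]_n.
Implicit Types x y a b : V.

Lemma ipC x y : ip x y = ip y x.
Proof. by rewrite /ip; apply: eq_bigr => i _; rewrite mulrC. Qed.
Lemma ipDl x y a : ip (x + y) a = ip x a + ip y a.
Proof. by rewrite /ip -big_split; apply: eq_bigr => i _; rewrite mxE mulrDl. Qed.
Lemma ipZl (c : R) x a : ip (c *: x) a = c * ip x a.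
Proof. by rewrite /ip mulr_sumr; apply: eq_bigr => i _; rewrite mxE mulrA. Qed.
Lemma ipNl x a : ip (- x) a = - ip x a.
Proof. by rewrite /ip -sumrN; apply: eq_bigr => i _; rewrite mxE mulNr. Qed.
Lemma ipBl x y a : ip (x - y) a = ip x a - ip y a.
Proof. by rewrite ipDl ipNl. Qed.
Lemma ip0l a : ip 0 a = 0.
Proof. by rewrite /ip big1 // => i _; rewrite mxE mul0r. Qed.
Lemma ipDr x y a : ip a (x + y) = ip a x + ip a y.
Proof. by rewrite ipC ipDl !(ipC a). Qed.
Lemma ipZr (c : R) x a : ip a (c *: x) = c * ip a x.
Proof. by rewrite ipC ipZl ipC. Qed.
Lemma ipBr x y a : ip a (x - y) = ip a x - ip a y.
Proof. by rewrite ipC ipBl !(ipC a). Qed.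
Lemma ip_sum (T : Type) (s : seq T) (F : T -> V) a :
  ip (\sum_(p <- s) F p) a = \sum_(p <- s) ip (F p) a.
Proof. elim: s => [|p s IH]; first by rewrite !big_nil ip0l.
by rewrite !big_cons ipDl IH. Qed.
Lemma ipxx0 x : ip x x = 0 -> x = 0.
Proof.
move=> /eqP; rewrite /ip psumr_eq0; last by move=> i _; rewrite -expr2 sqr_ge0.
move=> /allP H; apply/matrixP => i j; rewrite mxE (ord1 i).
have /H : j \in index_enum 'I_n by rewrite mem_index_enum.
by rewrite /= mulf_eq0 orbb => /eqP.
Qed.

Lemma ip_cont b : continuous (fun x : V => ip x b).
Proof.
move=> x; rewrite /ip.
suff H : forall s : seq 'I_n, {for x, continuous (fun y : V => \sum_(i <- s) y 0 i * b 0 i)} by exact: H.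
elim => [|i s IH].
  have -> : (fun y : V => \sum_(i <- [::]) y 0 i * b 0 i) = fun=> 0.
    by apply/funext => y; rewrite big_nil.
  exact: cst_continuous.
have -> : (fun y : V => \sum_(j <- i :: s) y 0 j * b 0 j) =
  (fun y : V => y 0 i * b 0 i) + (fun y : V => \sum_(j <- s) y 0 j * b 0 j).
  by apply/funext => y; rewrite big_cons.
apply: continuousD => //; apply: continuousM; [exact: coord_continuous|exact: cst_continuous].
Qed.

Lemma approx (A : set V) b y (eps : R) : closure A y -> 0 < eps ->
  exists x, A x /\ `|ip y b - ip x b| < eps.
Proof.
move=> Hcl e0.
have N := (cvgr_dist_lt (fun t : V => ip t b) (ip y b) (ip_cont b y) eps e0).
have [x [Ax Hx]] := Hcl _ (N _).
by exists x.
Qed.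

Lemma closure_le (A : set V) b (c : R) y : (forall x, A x -> ip x b < c) -> closure A y -> ip y b <= c.
Proof.
move=> H Hcl; rewrite leNgt; apply/negP => Hyc.
have Hp : 0 < ip y b - c by rewrite subr_gt0.
have [x [Ax Hx]] := @approx A b y (ip y b - c) Hcl Hp.
have := H _ Ax; have := ler_norm (ip y b - ip x b); lra.
Qed.

Lemma closure_ge (A : set V) b (c : R) y : (forall x, A x -> c < ip x b) -> closure A y -> c <= ip y b.
Proof.
move=> H Hcl; rewrite leNgt; apply/negP => Hyc.
have Hp : 0 < c - ip y b by rewrite subr_gt0.
have [x [Ax Hx]] := @approx A b y (c - ip y b) Hcl Hp.
rewrite distrC in Hx; have := H _ Ax; have := ler_norm (ip x b - ip y b); lra.
Qed.

Lemma conn_gt (A : set V) b (m : R) z1 z2 : connected A ->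
  (forall z, A z -> ip z b != m) -> A z1 -> m < ip z1 b -> A z2 -> m < ip z2 b.
Proof.
move=> HA Hne A1 H1 A2.
have E : A `&` [set z | m < ip z b] = A.
  apply: HA.
  - by exists z1.
  - exists ((fun z => ip z b) @^-1` [set u | m < u]) => //.
    apply: open_comp; [move=> u _; exact: ip_cont | exact: open_gt].
  - exists ((fun z => ip z b) @^-1` [set u | m <= u]).
      exact: (proj1 (continuous_closedP _) (ip_cont b) _ (@closed_ge _ m)).
    apply/seteqP; split => z [Az Hz]; split => //=; first exact: ltW.
    by rewrite lt_neqAle eq_sym Hne.
by rewrite -E in A2; case: A2.
Qed.

Lemma parallel (a b y0 : V) (rr m e : R) : ip a a != 0 -> 0 < e -> ip y0 a = rr ->
  (forall y, ip y a = rr -> `|y - y0| < e -> ip y b = m) ->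
  b = (ip b a / ip a a) *: a.
Proof.
move=> aa e0 y0a H.
set l := ip b a / ip a a; set v := b - l *: a.
have va : ip v a = 0 by rewrite /v ipBl ipZl /l divfK // subrr.
have vb : ip v b = 0.
  set s := e / (2 * (`|v| + 1)).
  have nv : 0 <= `|v| by [].
  have s0 : 0 < s by rewrite /s divr_gt0 // mulr_gt0 // ltr_wpDl.
  have Hs : s * `|v| < e.
    have -> : s * `|v| = e * (`|v| / (2 * (`|v| + 1))) by rewrite /s mulrAC mulrA.
    rewrite gtr_pMr // ltr_pdivrMr ?mulr_gt0 ?ltr_wpDl //; lra.
  have H0 := H y0 y0a; rewrite subrr normr0 in H0; have {H0} H0 := H0 e0.
  have H1 := H (y0 + s *: v); rewrite ipDl ipZl va mulr0 addr0 addrAC subrr add0r normrZ gtr0_norm // in H1.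
  have := H1 y0a Hs; rewrite ipDl ipZl H0 => /eqP.
  rewrite -subr_eq0 addrC addKr mulf_eq0 gt_eqF //=.
  by move/eqP.
have vv : ip v v = 0 by rewrite {2}/v ipBr ipZr vb va mulr0 subrr.
by apply/eqP; rewrite -subr_eq0; apply/eqP; exact: ipxx0.
Qed.

Lemma ipNr x a : ip a (- x) = - ip a x.
Proof. by rewrite ipC ipNl ipC. Qed.

Lemma sum_lt (T : eqType) (s : seq (T * nat)) (f : T * nat -> R) (g : T * nat -> R) :
  s != [::] -> (forall p, p \in s -> f p < g p) ->
  \sum_(p <- s) f p < \sum_(p <- s) g p.
Proof.
elim: s => // p s IH _ H; rewrite !big_cons.
case: s IH H => [|q s] IH H.
  by rewrite !big_nil !addr0; apply: H; rewrite mem_head.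
apply: ltr_leD; first by apply: H; rewrite mem_head.
apply: ltW; apply: IH => // p' Hp'; by apply: H; rewrite in_cons Hp' orbT.
Qed.
End H.

Theorem lemma14 (R : realType) (n : nat) (Phi S : seq 'rV[R]_n) (k : nat)
    (Rg : set 'rV[R]_n) (alpha : 'rV[R]_n) (r : nat) :
  root_system Phi -> irreducible_rs Phi ->
  simple_system Phi S ->
  (0 < k)%N ->
  catalan_region Phi k Rg -> dominant Phi S Rg ->
  positive_root Phi S alpha ->
  ceiling Phi k Rg alpha r ->
  rank_indecomposable Phi S k (theta Phi S Rg) alpha r.
Proof.
move=> [Phi0 _ Hred _ _] _ _ k0 [x0 [Cx0 HRg]] Hdom Hpa [[aPhi rk Hfac] Hnot0 Hside].
set C := catalan_complement Phi k in Cx0 HRg.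
have Rx0 : Rg x0 by rewrite HRg; exact: connected_component_refl.
have RC : forall x, Rg x -> C x by rewrite HRg; exact: connected_component_sub.
have Rconn : connected Rg by rewrite HRg; exact: component_connected.
have r0 : r != 0%N.
  by apply/negP => /eqP r0; apply: Hnot0; rewrite /hyperplane /= ip0l r0.
have rpos : (0 : R) < r%:R by rewrite ltr0n lt0n.
have Hlt : forall x, Rg x -> ip x alpha < r%:R.
  move=> x Rx; have := Hside x Rx; rewrite ip0l sub0r mulNr oppr_gt0 pmulr_rlt0 //.
  by rewrite subr_lt0.
case: Hfac => y0 y0a [e e0 Hcl].
rewrite /hyperplane /= in y0a Hcl.
have aa : ip alpha alpha != 0.
  apply/negP => /eqP /ipxx0 a0; move: Phi0; rewrite -a0 aPhi //.
have key : forall b (m : R), positive_root Phi S b ->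
    (forall y, ip y alpha = r%:R -> `|y - y0| < e -> ip y b = m) -> b = alpha.
  move=> b m Pb H.
  have E := @parallel _ _ _ _ _ _ _ _ aa e0 y0a H.
  have [l1|l1] := Hred alpha aPhi _ (eq_ind _ (fun z => z \in Phi) (proj1 Pb) _ E).
    by rewrite E l1 scale1r.
  rewrite E l1 scaleN1r in Pb.
  have := Hdom x0 _ Rx0 Pb; have := Hdom x0 _ Rx0 Hpa; rewrite ipNr oppr_gt0 => h1 h2.
  by move: (lt_trans h1 h2); rewrite ltxx.
have dbound : forall v t, decomp (theta Phi S Rg) k v t -> forall x, Rg x -> ip x v < t%:R.
  move=> v t [s [s0 Hs -> ->]] x Rx.
  rewrite ipC ip_sum natr_sum; apply: sum_lt => // p ps.
  have [_ _ [_ [_ H]]] := Hs p ps; rewrite ipC; exact: H.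
have thr : theta Phi S Rg r alpha by split => //; split.
have y0cl : closure Rg y0 by apply: Hcl => //; rewrite subrr normr0.
split => //.
- split.
    exists [:: (alpha, r)]; split.
    + by [].
    + by move=> p; rewrite inE => /eqP -> /=; split => //; rewrite lt0n.
    + by rewrite big_seq1.
    + by rewrite big_seq1.
  move=> t' Ht'.
  have [x [Rx Hx]] := @approx _ _ _ alpha _ _ y0cl ltr01.
  have Hxt := dbound _ _ Ht' x Rx; rewrite y0a in Hx.
  have : (r%:R : R) < t'%:R + 1.
    have := ler_norm (r%:R - ip x alpha); lra.
  by rewrite natr1 ltr_nat ltnS.
- move=> i j ij [b [c [[i0 [Pb Hb]] [[j0 [Pc Hc]] Eabc]]]].
  have Hbi : forall y, ip y alpha = r%:R -> `|y - y0| < e -> ip y b = i%:R.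
    move=> y ya yd; have cl := Hcl y ya yd.
    have h1 := @closure_le _ _ Rg b i%:R y Hb cl.
    have h2 := @closure_le _ _ Rg c j%:R y Hc cl.
    move: ya; rewrite Eabc ipDr -ij natrD => ya; lra.
  have Eb := key _ _ Pb Hbi.
  rewrite Eb in Eabc.
  have c0 : c = 0 by apply: (@addrI _ alpha); rewrite addr0 -Eabc.
  by move: (proj1 Pc); rewrite c0 (negbTE Phi0).
- move=> b t Pb [Hdec _] tk.
  have Hab := dbound _ _ Hdec.
  set mR := (t%:R - r%:R : R).
  have [Hall | Hn] := pselect (forall x, Rg x -> ip x b < mR).
    have h := Hdom x0 b Rx0 Pb; have h2 := Hall x0 Rx0.
    have rt : (r < t)%N by rewrite -(ltr_nat R); rewrite /mR in h2; lra.
    split; first by rewrite subn_eq0 -ltnNge.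
    split => // x Rx; rewrite natrB ?(ltnW rt) //; exact: Hall.
  have [x1 [Rx1 Hx1]] : exists x1, Rg x1 /\ mR <= ip x1 b.
    apply: contra_notP Hn => H x Rx; rewrite ltNge; apply/negP => h; apply: H; by exists x.
  have lowR : forall x, Rg x -> mR < ip x b.
    have [tr|rt] := ltnP t r.
      move=> x Rx; have := Hdom x b Rx Pb.
      have : (t%:R : R) < r%:R by rewrite ltr_nat.
      rewrite /mR; lra.
    have mE : mR = (t - r)%:R by rewrite natrB.
    have tk' : (t - r <= k)%N by apply: leq_trans (leq_subr r t) tk.
    have ne : forall z, Rg z -> ip z b != mR.
      by move=> z Rz; rewrite mE; apply: (RC z Rz) => //; exact: (proj1 Pb).
    have lt1 : mR < ip x1 b by rewrite lt_neqAle eq_sym ne.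
    move=> x Rx; exact: (@conn_gt _ _ _ _ _ _ _ Rconn ne Rx1 lt1 Rx).
  have Hbm : forall y, ip y alpha = r%:R -> `|y - y0| < e -> ip y b = mR.
    move=> y ya yd; have cl := Hcl y ya yd.
    have h1 := @closure_le _ _ Rg (alpha + b) t%:R y Hab cl.
    have h2 := @closure_ge _ _ Rg b mR y lowR cl.
    rewrite ipDr ya in h1; apply/eqP; rewrite eq_le h2 andbT; rewrite /mR; lra.
  have Eb := key _ _ Pb Hbm.
  have : mR = r%:R by rewrite -(Hbm y0 y0a) ?subrr ?normr0 // Eb.
  rewrite /mR => /eqP; rewrite subr_eq -natrD eqr_nat => /eqP ->.
  by rewrite addnK Eb.
Qed.
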